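(* Let $n$ be even, $\alpha$ a character of $F^*$, and $\pi$ a representation of $G_n$. Then $\pi$ is $(H_n,\chi_\alpha)$-distinguished if and only if it is $(H_n,\chi_\alpha^{-1})$-distinguished.
   Context: $F$ non-archimedean local field; $G_n=GL(n,F)$; $\epsilon_n=diag(1,-1,1,\dots)$, $H_n=\{g:\epsilon_ng\epsilon_n=g\}\simeq G_{n/2}\times G_{n/2}$, elements $h(g_1,g_2)$ with $g_1$ on odd-indexed and $g_2$ on even-indexed basis vectors; $\chi_\alpha(h(g_1,g_2))=\alpha(\det g_1/\det g_2)$. $\pi$ is $(H_n,\chi)$-distinguished if $Hom_{H_n}(\pi,\chi)\ne0$. *)

(* Defs.v *)
From HB Require Import structures.
From mathcomp Require Import all_boot all_order all_algebra.
From mathcomp Require Import reals.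
From mathcomp Require Import complex.
Set Implicit Arguments. Unset Strict Implicit. Unset Printing Implicit Defensive.
Import Order.TTheory GRing.Theory Num.Theory.
Local Open Scope ring_scope.

Definition is_nonarch_local_field (R : realType) (F : fieldType)
    (absF : F -> R) : Prop :=
  [/\ (forall x, 0 <= absF x) /\ (forall x, absF x = 0 <-> x = 0),
      (forall x y, absF (x * y) = absF x * absF y) /\
      (forall x y, absF (x + y) <= Num.max (absF x) (absF y)),
      (* discreteness (and nontriviality): a uniformizer *)
      (exists w : F, 0 < absF w < 1 /\
         forall x, x != 0 -> exists z : int, absF x = absF w ^ z),
      (forall u : nat -> F,
         (forall e : R, 0 < e -> exists N, forall p q, (N <= p)%N -> (N <= q)%N ->
             absF (u p - u q) < e) ->
         exists l, forall e : R, 0 < e -> exists N, forall p, (N <= p)%N ->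
             absF (u p - l) < e) &
      (* finite residue field *)
      (exists s : seq F, forall x, absF x <= 1 ->
         exists2 y, y \in s & absF (x - y) < 1)].

(* A (smooth = continuous) character of F^* with values in C^*, given as a
   function on F whose value at 0 is irrelevant. *)
Definition is_character (R : realType) (F : fieldType) (absF : F -> R)
    (alpha : F -> R[i]) : Prop :=
  [/\ forall x, x != 0 -> alpha x != 0,
      forall x y, x != 0 -> y != 0 -> alpha (x * y) = alpha x * alpha y &
      exists2 e : R, 0 < e & forall x, absF (x - 1) < e -> alpha x = 1].

Definition inv_char (R : realType) (F : fieldType) (alpha : F -> R[i]) : F -> R[i] :=
  fun x => (alpha x)^-1.

(* 0-based indices: the paper's odd-indexed basis vectors e_1, e_3, ... are
   the indices 0, 2, 4, ... ; the even-indexed ones are 1, 3, 5, ... *)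
Definition idx_odd (m : nat) (i : 'I_m) : 'I_(m.*2) :=
  Ordinal (etrans (ltn_double i m) (ltn_ord i)).
Definition idx_even (m : nat) (i : 'I_m) : 'I_(m.*2) :=
  Ordinal (etrans (ltn_Sdouble i m) (ltn_ord i)).

Definition eps_mx (F : fieldType) (n : nat) : 'M[F]_n :=
  \matrix_(i, j) (if i == j then (-1) ^+ (nat_of_ord i) else 0).

Definition inG (F : fieldType) (n : nat) (g : 'M[F]_n) : bool := g \in unitmx.

Definition inH (F : fieldType) (m : nat) (g : 'M[F]_(m.*2)) : bool :=
  (g \in unitmx) && (eps_mx F (m.*2) *m g *m eps_mx F (m.*2) == g).

(* for h = h(g1, g2): g1 on odd-indexed, g2 on even-indexed basis vectors *)
Definition blk1 (F : fieldType) (m : nat) (g : 'M[F]_(m.*2)) : 'M[F]_m :=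
  \matrix_(i, j) g (idx_odd i) (idx_odd j).
Definition blk2 (F : fieldType) (m : nat) (g : 'M[F]_(m.*2)) : 'M[F]_m :=
  \matrix_(i, j) g (idx_even i) (idx_even j).

Definition chi (R : realType) (F : fieldType) (m : nat) (alpha : F -> R[i])
    (h : 'M[F]_(m.*2)) : R[i] :=
  alpha (\det (blk1 h) / \det (blk2 h)).

(* pi : G_n -> GL(V), V a complex vector space, smooth: every vector has an
   open stabilizer, i.e. is fixed by a neighbourhood of 1 in G_n. *)
Definition is_smooth_rep (R : realType) (F : fieldType) (absF : F -> R)
    (n : nat) (V : lmodType R[i]) (pi : 'M[F]_n -> V -> V) : Prop :=
  [/\ forall g, inG g -> forall (a : R[i]) (u v : V),
        pi g (a *: u + v) = a *: pi g u + pi g v,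
      forall v, pi 1%:M v = v,
      forall g h, inG g -> inG h -> forall v, pi (g *m h) v = pi g (pi h v) &
      forall v, exists2 e : R, 0 < e & forall g, inG g ->
        (forall i j, absF (g i j - (1%:M : 'M[F]_n) i j) < e) -> pi g v = v].

Definition distinguished (R : realType) (F : fieldType) (m : nat)
    (V : lmodType R[i]) (pi : 'M[F]_(m.*2) -> V -> V) (ch : 'M[F]_(m.*2) -> R[i])
    : Prop :=
  exists lam : V -> R[i],
    [/\ forall (a : R[i]) (u v : V), lam (a *: u + v) = a * lam u + lam v,
        exists v, lam v != 0 &
        forall h, inH h -> forall v, lam (pi h v) = ch h * lam v].

(* Main.v *)
Require Import Defs.
From HB Require Import structures.
From mathcomp Require Import all_boot all_order all_algebra.
From mathcomp Require Import reals.
From mathcomp Require Import complex.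
From mathcomp Require Import ring.
Set Implicit Arguments. Unset Strict Implicit. Unset Printing Implicit Defensive.
Import Order.TTheory GRing.Theory Num.Theory.
Local Open Scope ring_scope.

Definition swpn (k : nat) : nat := if odd k then k.-1 else k.+1.

Lemma swpnK k : swpn (swpn k) = k.
Proof.
rewrite /swpn; case: k => [|k] //=; case Hk: (odd k) => /=; by rewrite ?Hk.
Qed.

Lemma odd_swpn k : odd (swpn k) = ~~ odd k.
Proof.
rewrite /swpn; case: k => [|k] //=; case Hk: (odd k) => /=; by rewrite ?Hk.
Qed.

Lemma swp_lt m (i : 'I_(m.*2)) : (swpn i < m.*2)%N.
Proof.
rewrite /swpn; case: ifP => Ho.
- by apply: leq_ltn_trans (leq_pred _) (ltn_ord i).
- have := ltn_ord i; rewrite -ltn_half_double => H.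
  by rewrite -(even_halfK (negbT Ho)) ltn_Sdouble.
Qed.

Definition swp m (i : 'I_(m.*2)) : 'I_(m.*2) := Ordinal (swp_lt i).

Lemma swpK m : involutive (@swp m).
Proof. by move=> i; apply: val_inj; rewrite /= swpnK. Qed.

Lemma swp_odd m (i : 'I_m) : swp (idx_odd i) = idx_even i.
Proof. by apply: val_inj; rewrite /= /swpn odd_double. Qed.

Lemma swp_even m (i : 'I_m) : swp (idx_even i) = idx_odd i.
Proof. by apply: val_inj; rewrite /= /swpn /= odd_double. Qed.

Definition wmx (F : fieldType) m : 'M[F]_(m.*2) :=
  \matrix_(i, j) (if j == swp i then 1 else 0).

Lemma mulwmx (F : fieldType) m (A : 'M[F]_(m.*2)) i j :
  (wmx F m *m A) i j = A (swp i) j.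
Proof.
rewrite mxE (bigD1 (swp i)) //= mxE eqxx mul1r big1 ?addr0 // => k Hk.
by rewrite mxE (negbTE Hk) mul0r.
Qed.

Lemma mulmxw (F : fieldType) m (A : 'M[F]_(m.*2)) i j :
  (A *m wmx F m) i j = A i (swp j).
Proof.
rewrite mxE (bigD1 (swp j)) //= mxE swpK eqxx mulr1 big1 ?addr0 // => k Hk.
rewrite mxE; case: eqP => [E|]; last by rewrite mulr0.
by rewrite E swpK eqxx in Hk.
Qed.

Lemma wwK (F : fieldType) m : wmx F m *m wmx F m = 1%:M.
Proof.
apply/matrixP => i j; rewrite mulwmx !mxE swpK.
by case: (i =P j) => [->|/nesym/eqP/negbTE ->]; rewrite ?eqxx.
Qed.

Lemma wunit (F : fieldType) m : wmx F m \in unitmx.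
Proof. by case: (mulmx1_unit (wwK F m)). Qed.

Lemma conjE (F : fieldType) m (h : 'M[F]_(m.*2)) i j :
  (wmx F m *m h *m wmx F m) i j = h (swp i) (swp j).
Proof. by rewrite mulmxw mulwmx. Qed.

Lemma blk1_conj (F : fieldType) m (h : 'M[F]_(m.*2)) :
  blk1 (wmx F m *m h *m wmx F m) = blk2 h.
Proof. by apply/matrixP => i j; rewrite [LHS]mxE conjE !swp_odd [RHS]mxE. Qed.

Lemma blk2_conj (F : fieldType) m (h : 'M[F]_(m.*2)) :
  blk2 (wmx F m *m h *m wmx F m) = blk1 h.
Proof. by apply/matrixP => i j; rewrite [LHS]mxE conjE !swp_even [RHS]mxE. Qed.

Lemma eps_mull (F : fieldType) n (A : 'M[F]_n) i j :
  (eps_mx F n *m A) i j = (-1) ^+ i * A i j.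
Proof.
rewrite mxE (bigD1 i) //= mxE eqxx big1 ?addr0 // => k Hk.
by rewrite mxE eq_sym (negbTE Hk) mul0r.
Qed.

Lemma eps_mulr (F : fieldType) n (A : 'M[F]_n) i j :
  (A *m eps_mx F n) i j = A i j * (-1) ^+ j.
Proof.
rewrite mxE (bigD1 j) //= mxE eqxx big1 ?addr0 // => k Hk.
by rewrite mxE (negbTE Hk) mulr0.
Qed.

Lemma inHP (F : fieldType) m (h : 'M[F]_(m.*2)) :
  inH h -> forall i j : 'I_(m.*2), (-1) ^+ i * h i j * (-1) ^+ j = h i j.
Proof.
case/andP=> _ /eqP E i j.
by rewrite -[in RHS]E eps_mulr eps_mull.
Qed.

Lemma sign_swp (F : fieldType) k : (-1) ^+ (swpn k) = - (-1) ^+ k :> F.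
Proof.
rewrite -signr_odd odd_swpn -[in RHS]signr_odd.
by case: (odd k); rewrite /= ?expr0 ?expr1 ?opprK.
Qed.

Lemma conj_inH (F : fieldType) m (h : 'M[F]_(m.*2)) :
  inH h -> inH (wmx F m *m h *m wmx F m).
Proof.
move=> Hh; have := Hh; case/andP=> hu _.
apply/andP; split; first by rewrite !unitmx_mul wunit hu.
apply/eqP/matrixP => i j; rewrite eps_mulr eps_mull !conjE.
rewrite -[in LHS](inHP Hh (swp i) (swp j)) /= !sign_swp.
set a := (-1) ^+ i; set b := (-1) ^+ j; set x := h _ _.
have -> : a * (- a * x * - b) * b = (a * a) * x * (b * b) by ring.
have sq : forall k : nat, (-1) ^+ k * (-1) ^+ k = 1 :> F.
  by move=> k; rewrite -{2}(mulr1 ((-1) ^+ k)) signrMK.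
by rewrite /a /b !sq mul1r mulr1.
Qed.

Lemma half_lt m (k : 'I_(m.*2)) : (k./2 < m)%N.
Proof. by rewrite ltn_half_double. Qed.

Definition split2 m (s : 'I_m + 'I_m) : 'I_(m.*2) :=
  match s with inl i => idx_odd i | inr i => idx_even i end.
Definition unsplit2 m (k : 'I_(m.*2)) : 'I_m + 'I_m :=
  let i := Ordinal (half_lt k) in if odd k then inr i else inl i.

Lemma split2K m : cancel (@split2 m) (@unsplit2 m).
Proof.
case=> i; rewrite /unsplit2 /=.
- by rewrite odd_double; congr inl; apply: val_inj; rewrite /= doubleK.
- by rewrite odd_double /=; congr inr; apply: val_inj; rewrite /= uphalf_double.
Qed.

Lemma unsplit2K m : cancel (@unsplit2 m) (@split2 m).
Proof.
move=> k; rewrite /unsplit2; case Ho: (odd k); apply: val_inj => /=.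
- by rewrite -[RHS](odd_double_half k) Ho add1n.
- by rewrite -[RHS](odd_double_half k) Ho add0n.
Qed.

Lemma sum_split2 (F : fieldType) m (G : 'I_(m.*2) -> F) :
  \sum_k G k = \sum_(i < m) G (idx_odd i) + \sum_(i < m) G (idx_even i).
Proof.
rewrite (reindex (@split2 m)); last first.
  by apply: onW_bij; exists (@unsplit2 m); [apply: split2K | apply: unsplit2K].
by rewrite big_sumType.
Qed.

Definition pbd (F : fieldType) m (A : 'M[F]_(m.*2)) :=
  forall i j : 'I_(m.*2), odd i != odd j -> A i j = 0.

Lemma blk1M (F : fieldType) m (A B : 'M[F]_(m.*2)) :
  pbd A -> blk1 (A *m B) = blk1 A *m blk1 B.
Proof.
move=> HA; apply/matrixP => i j; rewrite !mxE sum_split2.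
rewrite [X in _ + X]big1 ?addr0; last first.
  by move=> k _; rewrite HA ?mul0r //= !odd_double.
by under [RHS]eq_bigr do rewrite !mxE.
Qed.

Lemma blk2M (F : fieldType) m (A B : 'M[F]_(m.*2)) :
  pbd A -> blk2 (A *m B) = blk2 A *m blk2 B.
Proof.
move=> HA; apply/matrixP => i j; rewrite !mxE sum_split2.
rewrite [X in X + _]big1 ?add0r; last first.
  by move=> k _; rewrite HA ?mul0r //= !odd_double.
by under [RHS]eq_bigr do rewrite !mxE.
Qed.

Lemma blk1_1 (F : fieldType) m : blk1 (1%:M : 'M[F]_(m.*2)) = 1%:M.
Proof.
apply/matrixP => i j; rewrite !mxE.
have -> : (idx_odd i == idx_odd j) = (i == j).
  by apply/eqP/eqP => [/(congr1 val)/= /double_inj /val_inj|->].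
by [].
Qed.

Lemma blk2_1 (F : fieldType) m : blk2 (1%:M : 'M[F]_(m.*2)) = 1%:M.
Proof.
apply/matrixP => i j; rewrite !mxE.
have -> : (idx_even i == idx_even j) = (i == j).
  by apply/eqP/eqP => [/(congr1 val)/= [] /double_inj /val_inj|->].
by [].
Qed.

Lemma inH_pbd (F : fieldType) m (h : 'M[F]_(m.*2)) :
  (2%:R : F) != 0 -> inH h -> pbd h.
Proof.
move=> h2 Hh i j Hij; have E := inHP Hh i j.
have s : (-1) ^+ i * h i j * (-1) ^+ j = - h i j.
  rewrite mulrAC -exprD -signr_odd oddD.
  by move: Hij; case: (odd i); case: (odd j) => //= _; rewrite expr1 mulN1r.
rewrite s in E.
have : h i j * 2%:R = 0 by rewrite mulr_natr mulr2n -{1}E addNr.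
by move/eqP; rewrite mulf_eq0 (negbTE h2) orbF => /eqP.
Qed.

Lemma det_blk_neq0 (F : fieldType) m (h : 'M[F]_(m.*2)) :
  (2%:R : F) != 0 -> inH h -> (\det (blk1 h) != 0) && (\det (blk2 h) != 0).
Proof.
move=> h2 Hh; have P := inH_pbd h2 Hh.
have hu : h \in unitmx by case/andP: Hh.
have V := mulmxV hu.
apply/andP; split; apply/eqP => D.
- have := congr1 determinant (blk1M (invmx h) P).
  by rewrite V blk1_1 det1 det_mulmx D mul0r => /eqP; rewrite oner_eq0.
- have := congr1 determinant (blk2M (invmx h) P).
  by rewrite V blk2_1 det1 det_mulmx D mul0r => /eqP; rewrite oner_eq0.
Qed.

Definition xval (F : fieldType) m (h : 'M[F]_(m.*2)) := \det (blk1 h) / \det (blk2 h).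

Lemma alpha1 (R : realType) (F : fieldType) (alpha : F -> R[i])
  (Ha : forall x, x != 0 -> alpha x != 0)
  (Hb : forall x y, x != 0 -> y != 0 -> alpha (x * y) = alpha x * alpha y) :
  alpha 1 = 1.
Proof.
have n1 := Ha 1 (oner_neq0 F).
apply: (mulIf n1); rewrite mul1r -Hb ?oner_neq0 //. by rewrite mulr1.
Qed.

Lemma alpha_inv (R : realType) (F : fieldType) (alpha : F -> R[i])
  (Ha : forall x, x != 0 -> alpha x != 0)
  (Hb : forall x y, x != 0 -> y != 0 -> alpha (x * y) = alpha x * alpha y) x :
  x != 0 -> alpha (x^-1) = (alpha x)^-1.
Proof.
move=> nx; apply: (mulIf (Ha _ nx)); rewrite mulVf ?Ha // -Hb ?invr_eq0 //.
by rewrite mulVf // (alpha1 Ha Hb).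
Qed.

Lemma chi_conj_eq (R : realType) (F : fieldType) m (alpha : F -> R[i])
  (Ha : forall x, x != 0 -> alpha x != 0)
  (Hb : forall x y, x != 0 -> y != 0 -> alpha (x * y) = alpha x * alpha y)
  (h : 'M[F]_(m.*2)) :
  (xval h = 0 -> (alpha 0)^-1 = alpha 0) ->
  chi alpha (wmx F m *m h *m wmx F m) = chi (inv_char alpha) h.
Proof.
move=> Z; rewrite /chi blk1_conj blk2_conj /inv_char -invf_div.
have [E|nz] := eqVneq (\det (blk1 h) / \det (blk2 h)) 0.
  by rewrite E invr0 Z.
by rewrite (alpha_inv Ha Hb nz).
Qed.

Lemma zero_case (R : realType) (F : fieldType) m (alpha : F -> R[i])
  (V : lmodType R[i]) (pi : 'M[F]_(m.*2) -> V -> V)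
  (H1 : forall v, pi 1%:M v = v)
  (Hmul : forall g h, inG g -> inG h -> forall v, pi (g *m h) v = pi g (pi h v))
  (lam : V -> R[i]) (v0 : V) (Hv0 : lam v0 != 0)
  (Leq : forall h, inH h -> forall v, lam (pi h v) = chi alpha h * lam v)
  (h : 'M[F]_(m.*2)) : inH h -> xval h = 0 -> (alpha 0)^-1 = alpha 0.
Proof.
move=> Hh X0.
have [h2|h2] := eqVneq (2%:R : F) 0; last first.
  case/andP: (det_blk_neq0 h2 Hh) => d1 d2.
  by move: X0; rewrite /xval => /eqP; rewrite mulf_eq0 invr_eq0 (negbTE d1) (negbTE d2).
case: m pi H1 Hmul Leq h Hh X0 => [|m'] pi H1 Hmul Leq h Hh X0.
  by move: X0; rewrite /xval !det_mx00 divr1 => /eqP; rewrite oner_eq0.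
have m1 : (-1 : F) = 1.
  by apply/eqP; rewrite -subr_eq0 -opprD -mulr2n h2 oppr0.
have E : eps_mx F (m'.+1.*2) = 1%:M.
  by apply/matrixP => i j; rewrite !mxE m1 expr1n; case: eqP.
set w := wmx F m'.+1.
have wH : inH w by rewrite /inH E mul1mx mulmx1 eqxx wunit.
have b1 : blk1 w = 0.
  apply/matrixP => i j; rewrite !mxE swp_odd.
  have -> : (idx_odd j == idx_even i) = false.
    by apply/negbTE/eqP => /(congr1 (odd \o val)); rewrite /= !odd_double.
  by [].
have cw : chi alpha w = alpha 0 by rewrite /chi b1 det0 mul0r.
have cc : chi alpha w * chi alpha w = 1.
  apply: (mulIf Hv0); rewrite mul1r -mulrA -!Leq //.
  by rewrite -Hmul ?wwK ?H1 //; apply: wunit.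
rewrite cw in cc.
have nz : alpha 0 != 0 by apply/eqP => z; move: cc; rewrite z mul0r => /eqP; rewrite eq_sym oner_eq0.
by rewrite -[(alpha 0)^-1]mulr1 -cc mulrA mulVf ?mul1r.
Qed.

Lemma one_dir (R : realType) (F : fieldType) m (alpha : F -> R[i])
  (Ha : forall x, x != 0 -> alpha x != 0)
  (Hb : forall x y, x != 0 -> y != 0 -> alpha (x * y) = alpha x * alpha y)
  (V : lmodType R[i]) (pi : 'M[F]_(m.*2) -> V -> V)
  (Hlin : forall g, inG g -> forall (a : R[i]) (u v : V),
        pi g (a *: u + v) = a *: pi g u + pi g v)
  (H1 : forall v, pi 1%:M v = v)
  (Hmul : forall g h, inG g -> inG h -> forall v, pi (g *m h) v = pi g (pi h v)) :
  distinguished pi (chi alpha) -> distinguished pi (chi (inv_char alpha)).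
Proof.
case=> lam [Llin [v0 Hv0] Leq].
set w := wmx F m.
have wG : inG w := wunit F m.
have ww : w *m w = 1%:M := wwK F m.
have piww : forall v, pi w (pi w v) = v by move=> v; rewrite -Hmul // ww H1.
exists (fun v => lam (pi w v)); split.
- by move=> a u v; rewrite Hlin // Llin.
- by exists (pi w v0); rewrite piww.
- move=> h Hh v.
  have hG : inG h by case/andP: Hh.
  have Hc := conj_inH Hh.
  have cG : inG (w *m h *m w) by case/andP: Hc.
  have -> : pi w (pi h v) = pi (w *m h *m w) (pi w v).
    by rewrite -Hmul // -[RHS]Hmul // -mulmxA ww mulmx1.
  rewrite Leq // chi_conj_eq //.
  exact: (zero_case H1 Hmul Hv0 Leq Hh).
Qed.

Lemma dist_ext (R : realType) (F : fieldType) m (V : lmodType R[i])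
  (pi : 'M[F]_(m.*2) -> V -> V) (ch1 ch2 : 'M[F]_(m.*2) -> R[i]) :
  (forall h, ch1 h = ch2 h) -> distinguished pi ch1 -> distinguished pi ch2.
Proof.
move=> E [lam [L N Q]]; exists lam; split => // h Hh v; by rewrite Q // E.
Qed.

Theorem mainTheorem8 (R : realType) (F : fieldType) (absF : F -> R)
    (HF : is_nonarch_local_field absF) (m : nat) (alpha : F -> R[i])
    (Halpha : is_character absF alpha) (V : lmodType R[i])
    (pi : 'M[F]_(m.*2) -> V -> V) (Hpi : is_smooth_rep absF pi) :
  distinguished pi (chi alpha) <-> distinguished pi (chi (inv_char alpha)).
Proof.
case: Hpi => Hlin H1 Hmul _; case: Halpha => Ha Hb _.
split; first exact: one_dir.
move=> D.
have Ha' : forall x, x != 0 -> inv_char alpha x != 0.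
  by move=> x nx; rewrite /inv_char invr_eq0 Ha.
have Hb' : forall x y, x != 0 -> y != 0 ->
    inv_char alpha (x * y) = inv_char alpha x * inv_char alpha y.
  by move=> x y nx ny; rewrite /inv_char Hb // invfM.
apply: (dist_ext _ (one_dir Ha' Hb' Hlin H1 Hmul D)).
by move=> h; rewrite /chi /inv_char invrK.
Qed.
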